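(* There exist a set $\Omega$ with exactly three elements, a distribution $m\in\Delta(\Omega)$ and $\lambda\in[0,1)$ defining an irreducible Markov chain with transitions $\pi(\omega\mid\omega)=(1-\lambda)m(\omega)+\lambda$ and $\pi(\omega'\mid\omega)=(1-\lambda)m(\omega')$ for $\omega'\neq\omega$, a payoff function $r:\Omega\to\mathbb{R}$, a discount factor $\delta\in(0,1)$ and an initial belief $p_1\in\Delta(\Omega)$ such that the greedy strategy $\sigma_*$ is not optimal at $p_1$ in the decision problem described in the context.
   Context: Identify each $\omega\in\Omega$ with a unit vector of $\mathbb{R}^\Omega$ and $\Delta(\Omega)$ with the unit simplex. For $p\in\Delta(\Omega)$ let $\langle p,r\rangle=\sum_\omega p(\omega)r(\omega)$; $I=\{p:\langle p,r\rangle\ge0\}$, $J=\Delta(\Omega)\setminus I$. Let $M$ be the transition matrix and $\phi(q)=qM$ (for the chain above, $\phi(p)=m+\lambda(p-m)$). $\mathcal{S}(p)$ is the set of Borel probability measures on $\Delta(\Omega)$ with mean $p$, $\mu_p$ the Dirac mass at $p$. Decision problem from $p_1$: at each stage $n$, at belief $p_n$, the advisor chooses $\mu\in\mathcal{S}(p_n)$ (possibly depending on the past), a posterior $q_n\sim\mu$ is drawn, the stage payoff is $\mathbf{1}_{\{q_n\in I\}}$, and $p_{n+1}=\phi(q_n)$. A strategy's payoff is $\mathbb{E}[(1-\delta)\sum_{n\ge1}\delta^{n-1}\mathbf{1}_{\{q_n\in I\}}]$; $V_\delta(p_1)$ is the maximal payoff; a strategy is optimal at $p_1$ if it achieves it.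 The greedy strategy $\sigma_*$: at $p\in I$ choose $\mu_p$; at $p\in J$ choose a two-point splitting $p=a_Iq_I+a_Jq_J$ maximizing $a_I$ subject to $q_I\in I$, $q_J\in\Delta(\Omega)$, $a_I+a_J=1$, $a_I,a_J\ge0$. *)

(* Defs.v *)
From HB Require Import structures.
From mathcomp Require Import all_boot all_order all_algebra.
From mathcomp Require Import classical_sets reals.
From Stdlib Require List.
Set Implicit Arguments. Unset Strict Implicit. Unset Printing Implicit Defensive.
Import Order.TTheory GRing.Theory Num.Theory.
Local Open Scope ring_scope.
Local Open Scope classical_set_scope.

Section Defs.
Variables (R : realType) (Omega : finType).

Definition is_dist (p : Omega -> R) : Prop :=
  (forall w, 0 <= p w) /\ \sum_(w : Omega) p w = 1.

Definition inner (p r : Omega -> R) : R := \sum_(w : Omega) p w * r w.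

Definition inI (r p : Omega -> R) : Prop := is_dist p /\ 0 <= inner p r.
Definition inJ (r p : Omega -> R) : Prop := is_dist p /\ inner p r < 0.

Definition trans (m : Omega -> R) (lam : R) (w w' : Omega) : R :=
  (1 - lam) * m w' + (if w == w' then lam else 0).

Definition phi (m : Omega -> R) (lam : R) (q : Omega -> R) : Omega -> R :=
  fun w' => \sum_(w : Omega) q w * trans m lam w w'.

Fixpoint mpow (m : Omega -> R) (lam : R) (n : nat) (w w' : Omega) : R :=
  match n with
  | O => if w == w' then 1 else 0
  | S n => \sum_(v : Omega) mpow m lam n w v * trans m lam v w'
  end.

Definition irreducible (m : Omega -> R) (lam : R) : Prop :=
  forall w w', exists n, 0 < mpow m lam n w w'.

(* A finitely supported probability measure on Delta(Omega):
   a list of (weight, posterior) pairs. *)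
Definition splitting := seq (R * (Omega -> R)).

Definition is_splitting (p : Omega -> R) (s : splitting) : Prop :=
  (forall x, List.In x s -> 0 <= x.1 /\ is_dist x.2) /\
  \sum_(x <- s) x.1 = 1 /\
  (forall w, \sum_(x <- s) x.1 * x.2 w = p w).

(* A strategy maps the history of past posteriors (q_1, ..., q_{n-1}) to the
   splitting chosen at stage n. *)
Definition strategy := seq (Omega -> R) -> splitting.

Definition belief (m : Omega -> R) (lam : R) (p1 : Omega -> R)
  (h : seq (Omega -> R)) : Omega -> R :=
  match h with
  | [::] => p1
  | q :: h' => phi m lam (last q h')
  end.

(* h can occur with positive probability under sigma *)
Definition reachable (sigma : strategy) (h : seq (Omega -> R)) : Prop :=
  forall k, (k < size h)%N ->
    exists a, 0 < a /\ List.In (a, nth (fun _ => 0) h k) (sigma (take k h)).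

Definition admissible (m : Omega -> R) (lam : R) (p1 : Omega -> R)
  (sigma : strategy) : Prop :=
  forall h, reachable sigma h -> is_splitting (belief m lam p1 h) (sigma h).

(* stage payoff 1_{q in I} (posteriors are distributions) *)
Definition ind (r q : Omega -> R) : R := if 0 <= inner q r then 1 else 0.

Fixpoint trunc_payoff (r : Omega -> R) (delta : R) (sigma : strategy)
  (N : nat) (h : seq (Omega -> R)) : R :=
  match N with
  | O => 0
  | S N => \sum_(x <- sigma h)
             x.1 * ((1 - delta) * ind r x.2
                    + delta * trunc_payoff r delta sigma N (rcons h x.2))
  end.

(* E[(1-delta) sum_{n>=1} delta^(n-1) 1_{q_n in I}] (monotone limit) *)
Definition payoff (r : Omega -> R) (delta : R) (sigma : strategy) : R :=
  sup (range (fun N => trunc_payoff r delta sigma N [::])).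

Definition feasible (r p : Omega -> R) (aI : R) (qI qJ : Omega -> R) : Prop :=
  0 <= aI /\ 0 <= 1 - aI /\ inI r qI /\ is_dist qJ /\
  (forall w, p w = aI * qI w + (1 - aI) * qJ w).

Definition greedy_split (r p : Omega -> R) (t : R * (Omega -> R) * (Omega -> R))
  : Prop :=
  feasible r p t.1.1 t.1.2 t.2 /\
  (forall b qI qJ, feasible r p b qI qJ -> b <= t.1.1).

Definition greedy_sel (r : Omega -> R)
  (g : (Omega -> R) -> R * (Omega -> R) * (Omega -> R)) : Prop :=
  forall p, inJ r p -> greedy_split r p (g p).

Definition greedy_strategy (m : Omega -> R) (lam : R) (p1 r : Omega -> R)
  (g : (Omega -> R) -> R * (Omega -> R) * (Omega -> R)) : strategy :=
  fun h => let p := belief m lam p1 h in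
    if 0 <= inner p r then [:: (1, p)]
    else [:: ((g p).1.1, (g p).1.2); (1 - (g p).1.1, (g p).2)].

End Defs.

(* Main.v *)
Require Import Defs.
From HB Require Import structures.
From mathcomp Require Import all_boot all_order all_algebra.
From mathcomp Require Import classical_sets reals.
From mathcomp Require Import ring lra.
Import Order.TTheory GRing.Theory Num.Theory.
Local Open Scope ring_scope.

Definition v3 {R : realType} (x y z : R) : 'I_3 -> R :=
  fun w => if val w == 0%N then x else if val w == 1%N then y else z.
Definition o0 : 'I_3 := @Ordinal 3 0 isT.
Definition o1 : 'I_3 := @Ordinal 3 1 isT.
Definition o2 : 'I_3 := @Ordinal 3 2 isT.

Lemma ord3 (w : 'I_3) : w = o0 \/ w = o1 \/ w = o2.
Proof.
case: w => [[|[|[|k]]] Hk].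
- by left; apply: val_inj.
- by right; left; apply: val_inj.
- by right; right; apply: val_inj.
- by [].
Qed.

Lemma sum3 (R : realType) (F : 'I_3 -> R) : \sum_(w : 'I_3) F w = F o0 + F o1 + F o2.
Proof.
rewrite !big_ord_recl big_ord0 addr0 addrA.
congr (_ + _ + _); apply: congr1; apply: val_inj => //.
Qed.

Lemma v3_0 (R : realType) (x y z : R) : v3 x y z o0 = x. Proof. by []. Qed.
Lemma v3_1 (R : realType) (x y z : R) : v3 x y z o1 = y. Proof. by []. Qed.
Lemma v3_2 (R : realType) (x y z : R) : v3 x y z o2 = z. Proof. by []. Qed.

Lemma dist3 (R : realType) (q : 'I_3 -> R) :
  is_dist q <-> (0 <= q o0 /\ 0 <= q o1 /\ 0 <= q o2 /\ q o0 + q o1 + q o2 = 1).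
Proof.
rewrite /is_dist sum3; split.
- by move=> [H ->]; split; [|split; [|split]].
- move=> [H0 [H1 [H2 ->]]]; split => // w.
  by case: (ord3 w) => [->|[->|->]].
Qed.

Lemma inner3 (R : realType) (p r : 'I_3 -> R) :
  inner p r = p o0 * r o0 + p o1 * r o1 + p o2 * r o2.
Proof. by rewrite /inner sum3. Qed.

Lemma phiE (R : realType) (Omega : finType) (m : Omega -> R) (lam : R) (q : Omega -> R) w :
  \sum_(v : Omega) q v = 1 -> phi m lam q w = (1 - lam) * m w + lam * q w.
Proof.
move=> Hq; rewrite /phi /trans.
rewrite (eq_bigr (fun v => q v * ((1 - lam) * m w) + q v * (if v == w then lam else 0))); last first.
  by move=> v _; rewrite mulrDr.
rewrite big_split /=.
have -> : \sum_(v : Omega) q v * ((1 - lam) * m w) = (1 - lam) * m w.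
  by rewrite -big_distrl /= Hq mul1r.
congr (_ + _).
rewrite (bigD1 w) // eqxx big1 /=; first by rewrite addr0 mulrC.
by move=> v /= Hv; rewrite (negbTE Hv) mulr0.
Qed.

Definition r3 {R : realType} : 'I_3 -> R := v3 100 (-1) (-100).
Definition m3 {R : realType} : 'I_3 -> R := v3 (1/1000) (99/100) (9/1000).
Definition p13 {R : realType} : 'I_3 -> R := v3 (1/25) 0 (24/25).
Definition lam0 {R : realType} : R := 1/5.
Definition del0 {R : realType} : R := 1/2.
Definition Lam {R : realType} (x : R) : R := 101 * (1/1000 + 5/9 * (x - 1/1000)).

Lemma inner_r (R : realType) (q : 'I_3 -> R) :
  inner q r3 = 100 * q o0 - q o1 - 100 * q o2.
Proof. rewrite inner3 /r3 !v3_0 !v3_1 !v3_2; lra. Qed.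

Lemma phi3 (R : realType) (q : 'I_3 -> R) w : is_dist q ->
  phi m3 lam0 q w = 4/5 * m3 w + 1/5 * q w.
Proof. move=> [_ Hs]; rewrite phiE // /lam0; lra. Qed.

Lemma phi3_0 (R : realType) (q : 'I_3 -> R) : is_dist q ->
  phi m3 lam0 q o0 = 4/5 * (1/1000) + 1/5 * q o0.
Proof. by move=> Hq; rewrite phi3. Qed.

Lemma phi_dist (R : realType) (q : 'I_3 -> R) : is_dist q -> is_dist (phi m3 lam0 q).
Proof.
move=> Hq; have := Hq; rewrite !dist3 !phi3 // /m3 !v3_0 !v3_1 !v3_2; lra.
Qed.

Lemma ind_le (R : realType) (q : 'I_3 -> R) : is_dist q ->
  0 <= ind r3 q <= 1 /\ ind r3 q <= 101 * q o0.
Proof.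
rewrite dist3 /ind => Hq; case: ifP => H.
- move: H; rewrite inner_r => H; split; [apply/andP; split|]; lra.
- split; [apply/andP; split|]; lra.
Qed.

Lemma ind01 (R : realType) (q : 'I_3 -> R) : 0 <= ind r3 q <= 1.
Proof. by rewrite /ind; case: ifP => _; apply/andP; split; lra. Qed.

Lemma dual (R : realType) (p qI qJ : 'I_3 -> R) b :
  feasible r3 p b qI qJ -> b <= 1 + inner p r3 / 100 /\ b <= 101 * p o0.
Proof.
move=> [Hb0 [Hb1 [[HdI HiI] [HdJ Hp]]]].
move: HdI HdJ HiI; rewrite !dist3 !inner_r => HdI HdJ HiI.
rewrite !Hp.
have h1 : 0 <= b * (100 * qI o0 - qI o1 - 100 * qI o2) by apply: mulr_ge0.
have h2 : 0 <= (1 - b) * (200 * qJ o0 + 99 * qJ o1) by apply: mulr_ge0; lra.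
have h3 : 0 <= b * (101 * qI o0 - 1) by apply: mulr_ge0; lra.
have h4 : 0 <= (1 - b) * qJ o0 by apply: mulr_ge0; lra.
have e : qJ o2 = 1 - qJ o0 - qJ o1 by lra.
rewrite e in h2 *.
split; lra.
Qed.

Definition G3 {R : realType} (p : 'I_3 -> R) : R * ('I_3 -> R) * ('I_3 -> R) :=
  if p o1 <= 100 * p o0 then
    let a := 1 + inner p r3 / 100 in
    ((a, if a == 0 then v3 1 0 0 else v3 (p o0 / a) (p o1 / a) ((p o2 - (1 - a)) / a)),
     v3 0 0 1)
  else ((101 * p o0, v3 (1/101) (100/101) 0),
        v3 0 ((p o1 - 100 * p o0) / (1 - 101 * p o0)) (p o2 / (1 - 101 * p o0))).

Lemma forall3 (P : 'I_3 -> Prop) : P o0 -> P o1 -> P o2 -> forall w, P w.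
Proof. by move=> H0 H1 H2 w; case: (ord3 w) => [->|[->|->]]. Qed.

Lemma G3_sel (R : realType) : greedy_sel (r3 : 'I_3 -> R) G3.
Proof.
move=> p [Hd Hi]; move: Hi; rewrite inner_r => Hi.
have := Hd; rewrite dist3 => [[H0 [H1 [H2 Hs]]]].
rewrite /greedy_split /G3; case: ifP => Hab /=.
- rewrite inner_r.
  set a := 1 + (100 * p o0 - p o1 - 100 * p o2) / 100.
  have ea : a = 2 * p o0 + 99/100 * p o1 by rewrite /a; lra.
  split; last first.
    by move=> b qI qJ /dual [Hb _]; move: Hb; rewrite inner_r.
  case: eqP => Ha0.
  + have hx : p o0 = 0 by lra.
    have hy : p o1 = 0 by lra.
    split; first lra. split; first lra.
    split. split. rewrite dist3 !v3_0 !v3_1 !v3_2; lra.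
      rewrite inner_r !v3_0 !v3_1 !v3_2; lra.
    split. rewrite dist3 !v3_0 !v3_1 !v3_2; lra.
    apply: forall3; rewrite /= ?v3_0 ?v3_1 ?v3_2; lra.
  + have Hapos : 0 < a by lra.
    have Ha : a != 0 by apply/eqP.
    split; first lra. split; first lra.
    split. split.
      rewrite dist3 !v3_0 !v3_1 !v3_2.
      split; first by apply: divr_ge0; lra.
      split; first by apply: divr_ge0; lra.
      split; first by apply: divr_ge0; lra.
      rewrite -!mulrDl.
      have -> : p o0 + p o1 + (p o2 - (1 - a)) = a by lra.
      by rewrite divff.
      rewrite inner_r !v3_0 !v3_1 !v3_2.
      rewrite !mulrA -!mulrBl.
      have -> : 100 * p o0 - p o1 - 100 * (p o2 - (1 - a)) = 0 by lra.
      by rewrite mul0r.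
    split. rewrite dist3 !v3_0 !v3_1 !v3_2; lra.
    apply: forall3; rewrite /= ?v3_0 ?v3_1 ?v3_2 mulrC divfK //; lra.
- have Hlt : 100 * p o0 < p o1 by rewrite ltNge Hab.
  have Hd1 : 0 < 1 - 101 * p o0 by lra.
  have Hn : 1 - 101 * p o0 != 0 by apply/eqP; lra.
  split; last first.
    by move=> b qI qJ /dual [_ Hb].
  split; first lra. split; first lra.
  split. split.
    rewrite dist3 !v3_0 !v3_1 !v3_2; lra.
    rewrite inner_r !v3_0 !v3_1 !v3_2; lra.
  split.
    rewrite dist3 !v3_0 !v3_1 !v3_2.
    split; first lra.
    split; first by apply: divr_ge0; lra.
    split; first by apply: divr_ge0; lra.
    rewrite add0r -mulrDl.
    have -> : (p o1 - 100 * p o0) + p o2 = 1 - 101 * p o0 by lra.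
    by rewrite divff.
  apply: forall3; rewrite /= ?v3_0 ?v3_1 ?v3_2 ?[_ * (_ / _)]mulrC ?divfK //; lra.
Qed.

Lemma belief_rcons (R : realType) (m : 'I_3 -> R) lam p1 h q :
  belief m lam p1 (rcons h q) = phi m lam q.
Proof. by case: h => [|a h] //=; rewrite last_rcons. Qed.

Lemma gbound (R : realType) g (Hg : greedy_sel (r3 : 'I_3 -> R) g) N :
  forall h, is_dist (belief m3 lam0 p13 h) ->
  let T := trunc_payoff r3 del0 (greedy_strategy m3 lam0 p13 r3 g) N h in
  0 <= T <= 1 /\ T <= Lam (belief m3 lam0 p13 h o0).
Proof.
elim: N => [|N IH] h Hd /=.
  have := Hd; rewrite dist3 => - [H0 _]; rewrite /Lam.
  by split; [apply/andP; split|]; lra.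
rewrite /greedy_strategy; set p := belief m3 lam0 p13 h.
have := Hd; rewrite -/p dist3 => - [H0 [H1 [H2 Hs]]].
case: ifP => Hin.
- rewrite big_cons big_nil /=.
  have Hd' : is_dist (belief m3 lam0 p13 (rcons h p)) by rewrite belief_rcons; apply: phi_dist.
  have [/andP [T0 T1] TL] := IH _ Hd'.
  move: TL; rewrite belief_rcons phi3_0 // => TL.
  have Hind : ind r3 p = 1 by rewrite /ind Hin.
  move: Hin; rewrite inner_r => Hin.
  rewrite Hind; move: TL; rewrite /Lam /del0 => TL.
  by split; [apply/andP; split|]; lra.
- have HJ : inJ r3 p by split => //; rewrite ltNge Hin.
  have := Hg p HJ; case: (g p) => [[a qI] qJ] /= [[Ha0 [Ha1 [[HdI HiI] [HdJ Hp]]]] _].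
  move: Ha0 Ha1 Hp HdI HdJ => /= Ha0 Ha1 Hp HdI HdJ.
  rewrite big_cons big_cons big_nil /=.
  have HdI' : is_dist (belief m3 lam0 p13 (rcons h qI)) by rewrite belief_rcons; apply: phi_dist.
  have HdJ' : is_dist (belief m3 lam0 p13 (rcons h qJ)) by rewrite belief_rcons; apply: phi_dist.
  have [/andP [T0 T1] TL] := IH _ HdI'.
  have [/andP [U0 U1] UL] := IH _ HdJ'.
  move: TL UL; rewrite !belief_rcons !phi3_0 // => TL UL.
  have [/andP [I0 I1] IL] := @ind_le _ qI HdI.
  have [/andP [J0 J1] JL] := @ind_le _ qJ HdJ.
  set T := trunc_payoff _ _ _ _ (rcons h qI) in T0 T1 TL *.
  set U := trunc_payoff _ _ _ _ (rcons h qJ) in U0 U1 UL *.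
  clearbody T U.
  set X := (1 - del0) * ind r3 qI + del0 * T.
  set Y := (1 - del0) * ind r3 qJ + del0 * U.
  have X0 : 0 <= X <= 1 by rewrite /X /del0; apply/andP; split; lra.
  have Y0 : 0 <= Y <= 1 by rewrite /Y /del0; apply/andP; split; lra.
  have XL : X <= Lam (qI o0).
    rewrite /X /del0 /Lam; move: TL IL; rewrite /Lam.
    move: (ind r3 qI) (qI o0) => i x TL IL; lra.
  have YL : Y <= Lam (qJ o0).
    rewrite /Y /del0 /Lam; move: UL JL; rewrite /Lam.
    move: (ind r3 qJ) (qJ o0) => i x UL JL; lra.
  move/andP: X0 => [X0 X1]; move/andP: Y0 => [Y0 Y1].
  clearbody X Y.
  have aX0 : 0 <= a * X by apply: mulr_ge0.
  have aX1 : a * X <= a * 1 by apply: ler_wpM2l.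
  have aXL : a * X <= a * Lam (qI o0) by apply: ler_wpM2l.
  have bY0 : 0 <= (1 - a) * Y by apply: mulr_ge0.
  have bY1 : (1 - a) * Y <= (1 - a) * 1 by apply: ler_wpM2l.
  have bYL : (1 - a) * Y <= (1 - a) * Lam (qJ o0) by apply: ler_wpM2l.
  have Hp0 := Hp o0.
  move: aXL bYL; rewrite /Lam => aXL bYL.
  by split; [apply/andP; split|]; lra.
Qed.

Lemma p13_dist (R : realType) : is_dist (p13 : 'I_3 -> R).
Proof. rewrite dist3 /p13 !v3_0 !v3_1 !v3_2; lra. Qed.

Lemma p13_inner (R : realType) : inner (p13 : 'I_3 -> R) r3 = -92.
Proof. rewrite inner_r /p13 !v3_0 !v3_1 !v3_2; lra. Qed.

Definition GB {R : realType} : R := 2/25 + 23/25 * (1/2 * Lam (4/5 * (1/1000) + 1/5 * 0)).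

Lemma greedy_top (R : realType) g (Hg : greedy_sel (r3 : 'I_3 -> R) g) N :
  trunc_payoff r3 del0 (greedy_strategy m3 lam0 p13 r3 g) N [::] <= GB.
Proof.
case: N => [|N]; first by rewrite /= /GB /Lam; lra.
rewrite /= /greedy_strategy /=.
have Hin : (0 <= inner (p13 : 'I_3 -> R) r3) = false by rewrite p13_inner; apply/negbTE; rewrite -ltNge; lra.
rewrite Hin.
have HJ : inJ r3 (p13 : 'I_3 -> R) by split; [apply: p13_dist | rewrite p13_inner; lra].
have := Hg _ HJ; case: (g p13) => [[a qI] qJ] [Hf Hmax].
have [Hb _] := @dual _ _ _ _ _ Hf.
move: Hf Hmax Hb => /= [Ha0 [Ha1 [[HdI HiI] [HdJ Hp]]]] Hmax Hb.
have Hw : feasible r3 (p13 : 'I_3 -> R) (2/25) (v3 (1/2) 0 (1/2)) (v3 0 0 1).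
  split; first lra. split; first lra.
  split. split. rewrite dist3 !v3_0 !v3_1 !v3_2; lra.
    rewrite inner_r !v3_0 !v3_1 !v3_2; lra.
  split. rewrite dist3 !v3_0 !v3_1 !v3_2; lra.
  apply: forall3; rewrite /= ?v3_0 ?v3_1 ?v3_2 /p13 ?v3_0 ?v3_1 ?v3_2; lra.
have Ha : a = 2/25 by have := Hmax _ _ _ Hw; move: Hb; rewrite p13_inner; lra.
move: HiI; rewrite inner_r => HiI.
have := HdI; rewrite dist3 => - [I0 [I1 [I2 Is]]].
have := HdJ; rewrite dist3 => - [J0 [J1 [J2 Js]]].
have P0 := Hp o0; have P1 := Hp o1; have P2 := Hp o2.
move: P0 P1 P2; rewrite Ha /p13 !v3_0 !v3_1 !v3_2 => P0 P1 P2.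
have QJ0 : qJ o0 = 0 by lra.
have IJ : ind r3 qJ = 0 by rewrite /ind inner_r; apply: ifF; apply/negbTE; rewrite -ltNge; lra.
rewrite big_cons big_cons big_nil /= IJ.
have HdI' : is_dist (belief m3 lam0 p13 [:: qI]) by apply: phi_dist.
have HdJ' : is_dist (belief m3 lam0 p13 [:: qJ]) by apply: phi_dist.
have [/andP [T0 T1] _] := @gbound _ _ Hg N _ HdI'.
have [/andP [U0 U1] UL] := @gbound _ _ Hg N _ HdJ'.
move: UL; rewrite /= phi3_0 // QJ0 => UL.
have [/andP [I0' I1'] _] := @ind_le _ qI HdI.
move: T0 T1 U0 U1 UL.
set T := trunc_payoff _ _ _ _ [:: qI].
set U := trunc_payoff _ _ _ _ [:: qJ].
clearbody T U.
move: I0' I1'; move: (ind r3 qI) => i I0' I1' T0 T1 U0 U1 UL.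
rewrite /GB /del0.
move: UL; rewrite /Lam => UL; rewrite /Lam.
lra.
Qed.

Definition qI2 {R : realType} : 'I_3 -> R := v3 (1/100) (99/100) 0.
Definition qJ2 {R : realType} : 'I_3 -> R := v3 (1/250) 0 (249/250).
Definition tau {R : realType} (h : seq ('I_3 -> R)) : seq (R * ('I_3 -> R)) :=
  match h with
  | [::] => [:: (1, p13)]
  | [:: _] => [:: (4/5, qI2); (1/5, qJ2)]
  | _ => [:: (1, belief m3 lam0 p13 h)]
  end.

Lemma qI2_dist (R : realType) : is_dist (qI2 : 'I_3 -> R).
Proof. rewrite dist3 /qI2 !v3_0 !v3_1 !v3_2; lra. Qed.
Lemma qJ2_dist (R : realType) : is_dist (qJ2 : 'I_3 -> R).
Proof. rewrite dist3 /qJ2 !v3_0 !v3_1 !v3_2; lra. Qed.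

Lemma tau_bound (R : realType) N : forall h : seq ('I_3 -> R),
  0 <= trunc_payoff r3 del0 tau N h <= 1.
Proof.
elim: N => [|N IH] h /=; first by lra.
have I1 := @ind01 R; rewrite /del0.
case: h => [|q [|q2 t]] /=; rewrite ?big_cons big_nil /=.
- have := IH (rcons [::] p13); have := I1 p13; lra.
- have := IH (rcons [:: q] qI2); have := I1 qI2.
  have := IH (rcons [:: q] qJ2); have := I1 qJ2; lra.
- set b := (X in rcons _ X).
  have := IH (rcons [:: q, q2 & t] b); have := I1 b; lra.
Qed.

Lemma ind_p13 (R : realType) : ind r3 (p13 : 'I_3 -> R) = 0.
Proof. rewrite /ind p13_inner; apply: ifF; apply/negbTE; rewrite -ltNge; lra. Qed.
Lemma ind_qI2 (R : realType) : ind r3 (qI2 : 'I_3 -> R) = 1.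
Proof. rewrite /ind inner_r /qI2 !v3_0 !v3_1 !v3_2; apply: ifT; lra. Qed.

Lemma tau_two (R : realType) : trunc_payoff r3 del0 (@tau R) 2 [::] >= 1/5.
Proof.
rewrite /= !big_cons !big_nil /= ind_p13 ind_qI2 /del0.
have := @ind01 R qJ2; lra.
Qed.

Lemma tau_entries (R : realType) (h : seq ('I_3 -> R)) x : List.In x (tau h) ->
  x.2 = p13 \/ x.2 = qI2 \/ x.2 = qJ2 \/
  (x.2 = belief m3 lam0 p13 h /\ (1 < size h)%N).
Proof.
case: h => [|q [|q2 t]] /=.
- by case=> [<-|[]]; left.
- by case=> [<-|[<-|[]]]; right; [left|right; left].
- by case=> [<-|[]]; right; right; right.
Qed.

Lemma reach_last (R : realType) (h : seq ('I_3 -> R)) :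
  reachable tau h -> h = [::] \/ is_dist (last (fun _ => 0) h).
Proof.
elim/last_ind: h => [|h x IH] Hr; first by left.
right; rewrite last_rcons.
have Hr' : reachable tau h.
  move=> k Hk.
  have Hk' : (k < size (rcons h x))%N by rewrite size_rcons; apply: ltnW.
  have [a [Ha Hin]] := Hr k Hk'.
  exists a; split => //.
  by move: Hin; rewrite nth_rcons Hk -cats1 takel_cat // ltnW.
have Hk : (size h < size (rcons h x))%N by rewrite size_rcons.
have [a [Ha Hin]] := Hr _ Hk.
move: Hin; rewrite nth_rcons ltnn eqxx -cats1 take_size_cat //.
move=> /tau_entries /= [->|[->|[->|[-> Hs]]]].
- exact: p13_dist.
- exact: qI2_dist.
- exact: qJ2_dist.
- case: (IH Hr') => [Eh|Hl]; first by rewrite Eh in Hs.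
  case: h Hs Hl {IH Hr Hr' Hk} => [|y t] //= _ Hl.
  exact: phi_dist.
Qed.

Lemma tau_adm (R : realType) : admissible m3 lam0 p13 (@tau R).
Proof.
move=> h Hr.
case: h Hr => [|q [|q2 t]] Hr.
- split; first by move=> x /= [<-|[]]; split => /=; [lra|apply: p13_dist].
  split; first by rewrite big_cons big_nil /=; lra.
  by move=> w; rewrite big_cons big_nil /=; lra.
- have [a [Ha Hin]] := Hr 0%N isT.
  move: Hin => /= [[_ <-]|[]].
  rewrite /=.
  split; first by move=> x /= [<-|[<-|[]]]; split => /=; [lra|apply: qI2_dist|lra|apply: qJ2_dist].
  split; first by rewrite !big_cons big_nil /=; lra.
  move=> w; rewrite !big_cons big_nil /= phi3; last by apply: p13_dist.
  move: w; apply: forall3; rewrite /= /qI2 /qJ2 /m3 /p13 ?v3_0 ?v3_1 ?v3_2; lra.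
- have Hd : is_dist (belief m3 lam0 p13 [:: q, q2 & t]).
    case: (@reach_last _ _ Hr) => // Hl; exact: phi_dist.
  split; first by move=> x /= [<-|[]]; split => /=; [lra|].
  split; first by rewrite big_cons big_nil /=; lra.
  by move=> w; rewrite big_cons big_nil /=; lra.
Qed.

Theorem proposition1 (R : realType) :
  exists (Omega : finType) (m : Omega -> R) (lam : R) (r : Omega -> R)
         (delta : R) (p1 : Omega -> R),
    #|Omega| = 3%N /\
    is_dist m /\ 0 <= lam < 1 /\ irreducible m lam /\
    0 < delta < 1 /\ is_dist p1 /\
    (exists g, greedy_sel r g) /\
    (forall g, greedy_sel r g ->
       exists tau, admissible m lam p1 tau /\
         payoff r delta (greedy_strategy m lam p1 r g) < payoff r delta tau).
Proof.
exists 'I_3, m3, lam0, r3, del0, p13.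
split; first by rewrite card_ord.
split; first by rewrite dist3 /m3 !v3_0 !v3_1 !v3_2; lra.
split; first by rewrite /lam0; apply/andP; split; lra.
split.
  move=> w w'; exists 1%N => /=.
  rewrite (bigD1 w) // eqxx mul1r big1 /=; last first.
    by move=> v Hv; rewrite eq_sym (negbTE Hv) mul0r.
  have Hm : 0 < (m3 : 'I_3 -> R) w'.
    by case: (ord3 w') => [->|[->|->]]; rewrite /m3 ?v3_0 ?v3_1 ?v3_2; lra.
  rewrite addr0 /trans /lam0; case: (w == w'); lra.
split; first by rewrite /del0; apply/andP; split; lra.
split; first exact: p13_dist.
split; first by exists G3; apply: G3_sel.
move=> g Hg; exists tau; split; first exact: tau_adm.
rewrite /payoff.
apply: (@le_lt_trans _ _ GB).
  apply: ge_sup.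
    by exists (trunc_payoff r3 del0 (greedy_strategy m3 lam0 p13 r3 g) 0 [::]); exists 0%N.
  by move=> y [N _ <-]; apply: greedy_top.
apply: (@lt_le_trans _ _ (1/5)).
  rewrite /GB /Lam; lra.
apply: le_trans (tau_two R) _.
have Hub : has_ubound (range (fun N => trunc_payoff r3 del0 (@tau R) N [::])).
  exists 1 => y [N _ <-].
  by have /andP [_ ->] := @tau_bound R N [::].
by apply: (ub_le_sup Hub); exists 2%N.
Qed.
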